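(* Let $A$ satisfy the spectral assumption, with $R_1,R_2,N_1,N_2$ as below, and let $\gamma>0$, $\varepsilon_2,\varepsilon_3>0$. If $x\in\mathbb{R}^n$ satisfies $\|R_1x\|/\|R_2x\|>\gamma$, then for every $\omega\in\mathbb{N}$ $$\frac{\|R_1A^\omega x\|}{\|R_2A^\omega x\|}>\gamma_\omega:=C_\gamma\left(\frac{|\lambda_k|}{(1+\varepsilon_3|\lambda_k|)(|\lambda_{k+1}|+\varepsilon_2)}\right)^{\omega},\qquad C_\gamma:=\frac{1}{(1+\frac1\gamma)\,\zeta_{\varepsilon_3}(N_1^{-1})\,\zeta_{\varepsilon_2}(N_2)\,\|R_2\|}.$$ Consequently, if $\varepsilon_2,\varepsilon_3$ are such that the base of the power exceeds $1$, then for every $\gamma_+>0$ there is $\omega_0=O(\log(\gamma_+/\gamma))$ such that the ratio exceeds $\gamma_+$ for all $\omega>\omega_0$.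
   Context: Spectral assumption: $A\in\mathbb{R}^{n\times n}$ diagonalizable with eigenvalues $|\lambda_1|>\cdots\ge|\lambda_k|>1>|\lambda_{k+1}|\ge\cdots\ge|\lambda_n|$. $Q_1,Q_2$ have orthonormal columns spanning the unstable subspace $E_{\mathrm u}$ (eigenvectors of $\lambda_1..\lambda_k$) and stable subspace $E_{\mathrm s}$ (eigenvectors of $\lambda_{k+1}..\lambda_n$), $Q=[Q_1\ Q_2]$, $Q^{-1}=\begin{bmatrix}R_1\\R_2\end{bmatrix}$, and $Q^{-1}AQ=\mathrm{diag}(N_1,N_2)$ ($N_1$ invertible, $\rho(N_1^{-1})=1/|\lambda_k|$, $\rho(N_2)=|\lambda_{k+1}|$). For square $X$ and $\varepsilon>0$, $\zeta_\varepsilon(X):=\sup_{t\ge0}\|X^t\|/(\rho(X)+\varepsilon)^t$. Norms are spectral/Euclidean. *)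

(* Defs.v *)
From HB Require Import structures.
From mathcomp Require Import all_boot all_order all_algebra.
From mathcomp Require Import all_classical all_reals all_analysis.
From mathcomp Require Export complex.
Set Implicit Arguments. Unset Strict Implicit. Unset Printing Implicit Defensive.
Import Order.TTheory GRing.Theory Num.Theory.
Local Open Scope ring_scope.
Local Open Scope classical_set_scope.

Definition cmod (R : rcfType) (z : R[i]) : R :=
  Num.sqrt (complex.Re z ^+ 2 + complex.Im z ^+ 2).

Definition vnorm (R : realType) (p : nat) (v : 'cV[R]_p) : R :=
  Num.sqrt (\sum_(i < p) v i 0 ^+ 2).

Definition opnorm (R : realType) (p q : nat) (M : 'M[R]_(p, q)) : R :=
  sup [set vnorm (M *m v) | v in [set v : 'cV[R]_q | vnorm v <= 1]].

Definition specrad (R : realType) (p : nat) (X : 'M[R]_p) : R :=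
  sup [set cmod mu | mu in [set mu : R[i] | eigenvalue (map_mx (real_complex R) X) mu]].

Definition zeta (R : realType) (p : nat) (eps : R) (X : 'M[R]_p) : R :=
  sup [set opnorm (X ^+ t) / (specrad X + eps) ^+ t | t in [set: nat]].

(* Main.v *)
Require Import Defs.
From HB Require Import structures.
From mathcomp Require Import all_boot all_order all_algebra.
From mathcomp Require Import all_classical all_reals all_analysis.
From mathcomp Require Import complex.
From mathcomp Require Import ring lra zify.
Import Order.TTheory GRing.Theory Num.Theory.
Local Open Scope ring_scope.
Set Implicit Arguments. Unset Strict Implicit.
Local Notation phi := (map_mx (real_complex _)).

Section Aux.
Variable R : realType.

Lemma vnorm_ge0 p (v : 'cV[R]_p) : 0 <= vnorm v.
Proof. exact: sqrtr_ge0. Qed.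

Lemma sumsq_ge0 p (v : 'cV[R]_p) : 0 <= \sum_(i < p) v i 0 ^+ 2.
Proof. by apply: sumr_ge0 => i _; rewrite sqr_ge0. Qed.

Lemma vnorm_eq0 p (v : 'cV[R]_p) : vnorm v = 0 -> v = 0.
Proof.
move=> /eqP; rewrite /vnorm sqrtr_eq0 => h.
have h0 : \sum_(i < p) v i 0 ^+ 2 = 0 by apply/le_anti; rewrite h sumsq_ge0.
apply/matrixP => i j; rewrite ord1 mxE.
have := @psumr_eq0P R _ xpredT (fun i : 'I_p => v i 0 ^+ 2) (fun i _ => sqr_ge0 _) h0 i isT.
by move/eqP; rewrite sqrf_eq0 => /eqP.
Qed.

Lemma vnormZ p (c : R) (v : 'cV[R]_p) : vnorm (c *: v) = `|c| * vnorm v.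
Proof.
rewrite /vnorm.
have -> : \sum_(i < p) (c *: v) i 0 ^+ 2 = c ^+ 2 * \sum_(i < p) v i 0 ^+ 2.
  by rewrite mulr_sumr; apply: eq_bigr => i _; rewrite mxE exprMn.
by rewrite sqrtrM ?sqr_ge0 // sqrtr_sqr.
Qed.

Lemma vnorm_entry p (v : 'cV[R]_p) i : `|v i 0| <= vnorm v.
Proof.
rewrite /vnorm -sqrtr_sqr; apply: ler_wsqrtr.
rewrite (bigD1 i) //= lerDl; apply: sumr_ge0 => j _; exact: sqr_ge0.
Qed.

Lemma vnorm_le_sum p (v : 'cV[R]_p) : vnorm v <= \sum_(i < p) `|v i 0|.
Proof.
have S0 : 0 <= \sum_(i < p) `|v i 0| by apply: sumr_ge0 => i _.
rewrite /vnorm -[X in _ <= X](ger0_norm S0) -sqrtr_sqr.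
apply: ler_wsqrtr; rewrite expr2 mulr_suml; apply: ler_sum => i _.
rewrite -[v i 0 ^+ 2]ger0_norm ?sqr_ge0 // normrX expr2; apply: ler_wpM2l => //.
by rewrite (bigD1 i) //= lerDl; apply: sumr_ge0.
Qed.

Lemma vnorm_tr p (v : 'cV[R]_p) : vnorm v = Num.sqrt ((v^T *m v) 0 0).
Proof. by rewrite /vnorm mxE; congr Num.sqrt; apply: eq_bigr => i _; rewrite mxE expr2. Qed.


Definition n1 p (v : 'cV[R[i]]_p) : R[i] := \sum_(i < p) `|v i 0|.
Definition Sn p q (X : 'M[R[i]]_(p, q)) : R[i] := \sum_(i < p) \sum_(j < q) `|X i j|.

Arguments n1 {p}.
Arguments Sn {p q}.

Lemma n1_ge0 p (v : 'cV[R[i]]_p) : 0 <= n1 v.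
Proof. by apply: sumr_ge0 => i _. Qed.

Lemma Sn_ge0 p q (X : 'M[R[i]]_(p, q)) : 0 <= Sn X.
Proof. by apply: sumr_ge0 => i _; apply: sumr_ge0 => j _. Qed.

Lemma n1_entry p (v : 'cV[R[i]]_p) i : `|v i 0| <= n1 v.
Proof. by rewrite /n1 (bigD1 i) //= lerDl; apply: sumr_ge0. Qed.

Lemma n1_mul p q (X : 'M[R[i]]_(p, q)) (v : 'cV[R[i]]_q) : n1 (X *m v) <= Sn X * n1 v.
Proof.
rewrite /Sn mulr_suml; apply: ler_sum => i _; rewrite mxE.
apply: le_trans (ler_norm_sum _ _ _) _; rewrite mulr_suml; apply: ler_sum => j _.
by rewrite normrM; apply: ler_wpM2l => //; apply: n1_entry.
Qed.

Lemma diag_pow p (d : 'rV[R[i]]_p) w (v : 'cV[R[i]]_p) :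
  (diag_mx d ^+ w) *m v = \col_i (d 0 i ^+ w * v i 0).
Proof.
elim: w => [|w IH].
  by rewrite expr0 mul1mx; apply/matrixP => i j; rewrite [j]ord1 !mxE expr0 mul1r.
rewrite exprS -mulmxE -mulmxA IH mul_diag_mx; apply/matrixP => i j.
by rewrite [j]ord1 !mxE exprS mulrA.
Qed.

Lemma n1_diag_le p (d : 'rV[R[i]]_p) w (v : 'cV[R[i]]_p) c : 0 <= c ->
  (forall i, v i 0 != 0 -> `|d 0 i| <= c) ->
  n1 ((diag_mx d ^+ w) *m v) <= c ^+ w * n1 v.
Proof.
move=> c0 h; rewrite diag_pow /n1 mulr_sumr; apply: ler_sum => i _.
rewrite mxE normrM normrX.
have [->|nz] := eqVneq (v i 0) 0; first by rewrite normr0 !mulr0.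
by apply: ler_wpM2r => //; apply: lerXn2r; rewrite ?nnegrE //; apply: h.
Qed.

Lemma n1_diag_ge p (d : 'rV[R[i]]_p) w (v : 'cV[R[i]]_p) c : 0 <= c ->
  (forall i, v i 0 != 0 -> c <= `|d 0 i|) ->
  c ^+ w * n1 v <= n1 ((diag_mx d ^+ w) *m v).
Proof.
move=> c0 h; rewrite diag_pow /n1 mulr_sumr; apply: ler_sum => i _.
rewrite mxE normrM normrX.
have [->|nz] := eqVneq (v i 0) 0; first by rewrite normr0 !mulr0.
by apply: ler_wpM2r => //; apply: lerXn2r; rewrite ?nnegrE //; apply: h.
Qed.

Lemma normC_real (x : R) : `|real_complex R x| = real_complex R `|x|.
Proof. by rewrite normc_def /= expr0n /= addr0 sqrtr_sqr. Qed.

Lemma n1_phi p (u : 'cV[R]_p) :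
  n1 (map_mx (real_complex R) u) = real_complex R (\sum_(i < p) `|u i 0|).
Proof. by rewrite rmorph_sum; apply: eq_bigr => i _; rewrite mxE normC_real. Qed.


Lemma sup_ge0 (E : set R) : (forall e, E e -> 0 <= e) -> 0 <= sup E.
Proof.
move=> h; have [hs|nhs] := pselect (has_sup E); last by rewrite sup_out.
have [e Ee] := hs.1; apply: le_trans (h e Ee) _; exact: sup_upper_bound.
Qed.

Lemma vnorm0 p : vnorm (0 : 'cV[R]_p) = 0.
Proof. by rewrite -(scale0r (0 : 'cV[R]_p)) vnormZ normr0 mul0r. Qed.

Lemma opnorm_ge0 p q (M : 'M[R]_(p, q)) : 0 <= opnorm M.
Proof. by apply: sup_ge0 => e [v _ <-]; apply: vnorm_ge0. Qed.

Lemma opnorm_hassup p q (M : 'M[R]_(p, q)) :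
  has_sup [set vnorm (M *m v) | v in [set v : 'cV[R]_q | vnorm v <= 1]].
Proof.
split.
  by exists (vnorm (M *m 0)); exists 0 => //=; rewrite vnorm0 ler01.
exists (\sum_(i < p) \sum_(j < q) `|M i j|) => _ [v /= hv <-].
apply: le_trans (vnorm_le_sum _) _; apply: ler_sum => i _; rewrite mxE.
apply: le_trans (ler_norm_sum _ _ _) _; apply: ler_sum => j _.
rewrite normrM -[X in _ <= X]mulr1; apply: ler_wpM2l => //.
exact: le_trans (vnorm_entry v j) hv.
Qed.

Lemma opnorm_bound p q (M : 'M[R]_(p, q)) v :
  vnorm (M *m v) <= opnorm M * vnorm v.
Proof.
have hs := opnorm_hassup M.
have [v0|vn0] := eqVneq (vnorm v) 0.
  by rewrite (vnorm_eq0 v0) mulmx0 !vnorm0 mulr0.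
have vp : 0 < vnorm v by rewrite lt0r vn0 vnorm_ge0.
have h1 : vnorm ((vnorm v)^-1 *: v) <= 1.
  by rewrite vnormZ ger0_norm ?invr_ge0 ?vnorm_ge0 // mulVf.
have := sup_upper_bound hs (ex_intro2 _ _ ((vnorm v)^-1 *: v) h1 erefl).
rewrite -scalemxAr vnormZ ger0_norm ?invr_ge0 ?vnorm_ge0 // mulrC -/(opnorm M).
by rewrite ler_pdivrMr.
Qed.

Lemma zeta_ge0 p eps (X : 'M[R]_p) : 0 < specrad X + eps -> 0 <= zeta eps X.
Proof.
move=> hs; apply: sup_ge0 => e [t _ <-].
by apply: divr_ge0; [apply: opnorm_ge0 | apply: exprn_ge0; apply: ltW].
Qed.

Lemma zeta_bound p eps (X : 'M[R]_p) : 0 < specrad X + eps -> 0 < zeta eps X ->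
  forall t, opnorm (X ^+ t) <= zeta eps X * (specrad X + eps) ^+ t.
Proof.
move=> hs hz t.
have [hsup|nhs] := pselect (has_sup [set opnorm (X ^+ t) / (specrad X + eps) ^+ t | t in [set: nat]]); last first.
  by move: hz; rewrite /zeta sup_out // ltxx.
have := sup_upper_bound hsup (ex_intro2 _ _ t I erefl).
by rewrite -/(zeta eps X) ler_pdivrMr // exprn_gt0.
Qed.

End Aux.

Lemma pow_comm (T : comNzRingType) p q (B : 'M[T]_(p, q)) (X : 'M[T]_q) (Y : 'M[T]_p) :
  B *m X = Y *m B -> forall w, B *m X ^+ w = Y ^+ w *m B.
Proof.
move=> h; elim=> [|w IH]; first by rewrite !expr0 mulmx1 mul1mx.
by rewrite !exprSr -!mulmxE mulmxA IH -mulmxA h mulmxA.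
Qed.

Lemma inv_pow (T : comNzRingType) n (N Ni : 'M[T]_n) :
  Ni *m N = 1%:M -> forall w, Ni ^+ w *m N ^+ w = 1%:M.
Proof.
move=> h; elim=> [|w IH]; first by rewrite !expr0 mulmx1.
by rewrite exprSr exprS -!mulmxE -mulmxA (mulmxA Ni) h mul1mx IH.
Qed.

Lemma map_pow (R : realType) n (A : 'M[R]_n) w :
  map_mx (real_complex R) (A ^+ w) = (map_mx (real_complex R) A) ^+ w.
Proof.
elim: w => [|w IH]; first by rewrite !expr0 map_mx1.
by rewrite !exprS -!mulmxE map_mxM IH.
Qed.

Lemma blocks (R : realType) k m (A : 'M[R]_(k + m)) (Q1 : 'M[R]_(k + m, k))
  (Q2 : 'M[R]_(k + m, m)) (R1 : 'M[R]_(k, k + m)) (R2 : 'M[R]_(m, k + m))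
  (N1 : 'M[R]_k) (N2 : 'M[R]_m) :
  row_mx Q1 Q2 \in unitmx ->
  invmx (row_mx Q1 Q2) = col_mx R1 R2 ->
  invmx (row_mx Q1 Q2) *m A *m row_mx Q1 Q2 = block_mx N1 0 0 N2 ->
  [/\ R1 *m Q1 = 1%:M /\ R2 *m Q2 = 1%:M, R1 *m A = N1 *m R1, R2 *m A = N2 *m R2,
      A *m Q1 = Q1 *m N1 & A *m Q2 = Q2 *m N2].
Proof.
move=> hu hinv hblk.
have QQi : row_mx Q1 Q2 *m col_mx R1 R2 = 1%:M by rewrite -hinv mulmxV.
have QiQ : col_mx R1 R2 *m row_mx Q1 Q2 = 1%:M by rewrite -hinv mulVmx.
move: QiQ; rewrite mul_col_row (scalar_mx_block k m) => /eq_block_mx [e1 _ _ e2].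
have h1 : col_mx R1 R2 *m A = block_mx N1 0 0 N2 *m col_mx R1 R2.
  by rewrite -hblk -!mulmxA QQi mulmx1 hinv.
move: h1; rewrite mul_col_mx mul_block_col !mul0mx addr0 add0r => /eq_col_mx [e3 e4].
have h2 : A *m row_mx Q1 Q2 = row_mx Q1 Q2 *m block_mx N1 0 0 N2.
  by rewrite -hblk hinv !mulmxA QQi mul1mx.
move: h2; rewrite mul_mx_row mul_row_block !mulmx0 addr0 add0r => /eq_row_mx [e5 e6].
by [].
Qed.

Lemma normc_cmod (R : realType) (z : R[i]) : `|z| = real_complex R (cmod z).
Proof. by rewrite normc_def. Qed.

Lemma ge0_realC (R : realType) (c : R[i]) : 0 <= c -> c = real_complex R (complex.Re c) /\ 0 <= complex.Re c.
Proof. by case: c => a b; rewrite lecE /= => /andP[/eqP -> ha]. Qed.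

Lemma stable_bound (R : realType) k m (A : 'M[R]_(k + m)) (lam : nat -> R[i])
  (P : 'M[R[i]]_(k + m)) (Q2 : 'M[R]_(k + m, m)) (R2 : 'M[R]_(m, k + m)) (N2 : 'M[R]_m) :
  P \in unitmx ->
  map_mx (real_complex R) A = P *m diag_mx (\row_(j < k + m) lam j.+1) *m invmx P ->
  (forall i j : nat, (1 <= i)%N -> (i <= j)%N -> (j <= k + m)%N ->
     cmod (lam j) <= cmod (lam i)) ->
  (forall x : 'cV[R]_(k + m),
     (exists y : 'cV[R]_m, x = Q2 *m y) ->
     (exists z : 'cV[R[i]]_m, map_mx (real_complex R) x = rsubmx P *m z)) ->
  R2 *m Q2 = 1%:M -> A *m Q2 = Q2 *m N2 ->
  exists K : R, 0 <= K /\ forall (z : 'cV[R]_m) w,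
    vnorm (N2 ^+ w *m z) <= K * cmod (lam k.+1) ^+ w * vnorm z.
Proof.
move=> hPu hA hmono hspan hRQ hAQ.
set D := diag_mx (\row_(j < k + m) lam j.+1).
set l := cmod (lam k.+1).
have l0 : 0 <= l by apply: sqrtr_ge0.
have hPD : P *m D = phi A *m P by rewrite hA mulmxKV.
have hpow : forall w, P *m D ^+ w = phi A ^+ w *m P by apply: pow_comm.
have hQpow : forall w, Q2 *m N2 ^+ w = A ^+ w *m Q2 by apply: pow_comm.
set Kc := Sn (phi R2 *m P) * Sn (invmx P) * Sn (phi Q2).
have Kc0 : 0 <= Kc by rewrite !mulr_ge0 ?Sn_ge0.
have [KcE Kr0] := ge0_realC Kc0.
exists (complex.Re Kc * m%:R); split; first by rewrite mulr_ge0 ?ler0n.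
move=> z w.
have [c hc] := hspan (Q2 *m z) (ex_intro _ z erefl).
set v := col_mx (0 : 'cV[R[i]]_k) c.
have hPv : P *m v = phi (Q2 *m z).
  by rewrite hc -[P in P *m _]hsubmxK mul_row_col mulmx0 add0r.
have hN : N2 ^+ w *m z = R2 *m (A ^+ w *m (Q2 *m z)).
  by rewrite (mulmxA (A ^+ w)) -hQpow -(mulmxA Q2) (mulmxA R2) hRQ mul1mx.
have hphiN : phi (N2 ^+ w *m z) = (phi R2 *m P) *m (D ^+ w *m v).
  by rewrite hN map_mxM [X in _ *m X]map_mxM map_pow -hPv (mulmxA (phi A ^+ w)) -hpow !mulmxA.
have hsupp : forall i, v i 0 != 0 -> `|(\row_(j < k + m) lam j.+1) 0 i| <= real_complex R l.
  move=> t; case: (ltnP t k) => hk.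
    have -> : t = lshift m (Ordinal hk) by apply: val_inj.
    by rewrite col_mxEu !mxE eqxx.
  move=> _; rewrite mxE normc_cmod lecR; apply: hmono => //=; have := ltn_ord t; lia.
have hv : v = invmx P *m phi (Q2 *m z) by rewrite -hPv mulKmx.
have lc0 : 0 <= real_complex R l by rewrite ler0c.
have e1 : n1 (phi (N2 ^+ w *m z)) <= Kc * real_complex R l ^+ w * n1 (phi z).
  rewrite hphiN; apply: le_trans (n1_mul _ _) _.
  apply: le_trans (ler_wpM2l (Sn_ge0 _) (n1_diag_le w lc0 hsupp)) _.
  have e2 : n1 v <= Sn (invmx P) * (Sn (phi Q2) * n1 (phi z)).
    rewrite hv; apply: le_trans (n1_mul _ _) _; apply: ler_wpM2l; first exact: Sn_ge0.
    by rewrite map_mxM; apply: n1_mul.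
  apply: le_trans (ler_wpM2l (Sn_ge0 _) (ler_wpM2l (exprn_ge0 _ lc0) e2)) _.
  by rewrite /Kc le_eqVlt; apply/orP; left; apply/eqP; ring.
move: e1; rewrite !n1_phi KcE -rmorphXn -!rmorphM lecR => e1.
apply: le_trans (vnorm_le_sum _) _; apply: le_trans e1 _.
have hS : \sum_(i < m) `|z i 0| <= m%:R * vnorm z.
  have : \sum_(i < m) `|z i 0| <= \sum_(i < m) vnorm z by apply: ler_sum => i _; apply: vnorm_entry.
  by rewrite sumr_const card_ord mulr_natl.
have aL0 : 0 <= complex.Re Kc * l ^+ w by rewrite mulr_ge0 ?exprn_ge0.
rewrite /=; nra.
Qed.

Lemma unstable_bound (R : realType) k m (A : 'M[R]_(k + m)) (lam : nat -> R[i])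
  (P : 'M[R[i]]_(k + m)) (Q1 : 'M[R]_(k + m, k)) (R1 : 'M[R]_(k, k + m)) (N1 : 'M[R]_k) :
  P \in unitmx ->
  map_mx (real_complex R) A = P *m diag_mx (\row_(j < k + m) lam j.+1) *m invmx P ->
  (forall i j : nat, (1 <= i)%N -> (i <= j)%N -> (j <= k + m)%N ->
     cmod (lam j) <= cmod (lam i)) ->
  (forall x : 'cV[R]_(k + m),
     (exists y : 'cV[R]_k, x = Q1 *m y) ->
     (exists z : 'cV[R[i]]_k, map_mx (real_complex R) x = lsubmx P *m z)) ->
  R1 *m Q1 = 1%:M -> A *m Q1 = Q1 *m N1 ->
  exists K : R, 0 <= K /\ forall (y : 'cV[R]_k) w,
    cmod (lam k) ^+ w * vnorm y <= K * vnorm (N1 ^+ w *m y).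
Proof.
move=> hPu hA hmono hspan hRQ hAQ.
set D := diag_mx (\row_(j < k + m) lam j.+1).
set L := cmod (lam k).
have L0 : 0 <= L by apply: sqrtr_ge0.
have Lc0 : 0 <= real_complex R L by rewrite ler0c.
have hPD : P *m D = phi A *m P by rewrite hA mulmxKV.
have hpow : forall w, P *m D ^+ w = phi A ^+ w *m P by apply: pow_comm.
have hQpow : forall w, Q1 *m N1 ^+ w = A ^+ w *m Q1 by apply: pow_comm.
set Kc := Sn (phi R1 *m P) * Sn (invmx P *m phi Q1).
have Kc0 : 0 <= Kc by rewrite !mulr_ge0 ?Sn_ge0.
have [KcE Kr0] := ge0_realC Kc0.
exists (complex.Re Kc * k%:R); split; first by rewrite mulr_ge0 ?ler0n.
move=> y w.
have [c hc] := hspan (Q1 *m y) (ex_intro _ y erefl).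
set v := col_mx c (0 : 'cV[R[i]]_m).
have hPv : P *m v = phi (Q1 *m y).
  by rewrite hc -[P in P *m _]hsubmxK mul_row_col mulmx0 addr0.
have hy : phi y = (phi R1 *m P) *m v.
  by rewrite -mulmxA hPv -map_mxM mulmxA hRQ mul1mx.
have hDv : D ^+ w *m v = (invmx P *m phi Q1) *m phi (N1 ^+ w *m y).
  rewrite -mulmxA -map_mxM mulmxA hQpow -mulmxA map_mxM map_pow -hPv (mulmxA (phi A ^+ w)) -hpow -mulmxA.
  by rewrite mulKmx.
have hsupp : forall t, v t 0 != 0 -> real_complex R L <= `|(\row_(j < k + m) lam j.+1) 0 t|.
  move=> t; case: (ltnP t k) => hk.
    move=> _; rewrite mxE normc_cmod lecR; apply: hmono => //=; lia.
  have hj : (t - k < m)%N by have := ltn_ord t; lia.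
  have -> : t = rshift k (Ordinal hj) by apply: val_inj => /=; lia.
  by rewrite col_mxEd !mxE eqxx.
have e1 : real_complex R L ^+ w * n1 (phi y) <= Kc * n1 (phi (N1 ^+ w *m y)).
  rewrite hy; apply: le_trans (ler_wpM2l (exprn_ge0 _ Lc0) (n1_mul _ _)) _.
  rewrite mulrCA /Kc -mulrA; apply: ler_wpM2l; first exact: Sn_ge0.
  apply: le_trans (n1_diag_ge w Lc0 hsupp) _.
  by rewrite hDv; apply: n1_mul.
move: e1; rewrite !n1_phi KcE -rmorphXn -!rmorphM lecR => e1.
have hS : \sum_(i < k) `|(N1 ^+ w *m y) i 0| <= k%:R * vnorm (N1 ^+ w *m y).
  have : \sum_(i < k) `|(N1 ^+ w *m y) i 0| <= \sum_(i < k) vnorm (N1 ^+ w *m y).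
    by apply: ler_sum => i _; apply: vnorm_entry.
  by rewrite sumr_const card_ord mulr_natl.
have hv := vnorm_le_sum y.
have LwL0 : 0 <= L ^+ w by rewrite exprn_ge0.
rewrite /=; nra.
Qed.

Lemma arith1 (R : realType) (g Z3 Z2 O pa ps y z Y W : R) :
  0 < g -> 0 < Z3 -> 0 < Z2 -> 1 <= O -> 0 < pa -> 0 < ps -> 0 <= z ->
  g * z < y -> y <= Z3 * pa^-1 * Y -> W <= Z2 * ps * z -> 0 <= W -> 0 <= Y ->
  1 / ((1 + 1 / g) * Z3 * Z2 * O) * (pa / ps) * W < Y.
Proof.
move=> g0 Z30 Z20 O1 pa0 ps0 z0 hgz hy hW W0 Y0.
set ig := 1 / g.
have ig0 : 0 < ig by rewrite divr_gt0.
have O0 : 0 < O by apply: lt_le_trans ltr01 O1.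
have ig1 : 0 < 1 + ig by rewrite addr_gt0.
have gig : g * ig = 1 by rewrite /ig mulrC divfK ?gt_eqF.
have hz : z < y * ig.
  by rewrite /ig mulrC mul1r ltr_pdivlMl // mulrC.
have h1 : pa * y <= Z3 * Y.
  have := ler_wpM2l (ltW pa0) hy.
  have -> : pa * (Z3 * pa^-1 * Y) = Z3 * Y by field; rewrite gt_eqF.
  by [].
have hA : pa * z < Z3 * Y * ig by nra.
have hO' : ig <= (1 + ig) * O by nra.
have ZY0 : 0 <= Z3 * Y by rewrite mulr_ge0 // ltW.
have hB : Z3 * Y * ig <= Y * ((1 + ig) * Z3 * O) by nra.
have Dn0 : 0 < (1 + ig) * Z3 * Z2 * O by rewrite !mulr_gt0 // ?(lt_le_trans ltr01 O1) // addr_gt0.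
have -> : 1 / ((1 + ig) * Z3 * Z2 * O) * (pa / ps) * W = (pa * W) / ((1 + ig) * Z3 * Z2 * O * ps).
  by field; rewrite !gt_eqF // ?mulr_gt0 ?(lt_le_trans ltr01 O1) // addr_gt0.
rewrite ltr_pdivrMr ?mulr_gt0 //.
have hW' : pa * W <= pa * (Z2 * ps * z) by rewrite ler_wpM2l // ltW.
have Zps : 0 < Z2 * ps by rewrite mulr_gt0.
nra.
Qed.

Lemma arith2 (R : realType) (gp C g vy vz Y W K1 K2 Lw lw bw bl qw : R) :
  0 < gp -> 0 < g -> 0 <= K1 -> 0 <= K2 -> K1 * K2 <= C -> 0 <= vz ->
  g * vz < vy -> Lw * vy <= K1 * Y -> W <= K2 * lw * vz -> 0 <= lw -> lw <= bl ->
  gp * C / g <= bw -> bw * bl * qw = Lw -> 1 < qw -> 0 < bw -> 0 < bl -> 0 <= W ->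
  gp * W < Y.
Proof.
move=> gp0 g0 K10 K20 hC vz0 hg hL hW lw0 lwb hb hq q1 bw0 bl0 W0.
have vy0 : 0 < vy by apply: le_lt_trans hg; rewrite mulr_ge0 // ltW.
set ig := 1 / g.
have ig0 : 0 < ig by rewrite divr_gt0.
have gig : g * ig = 1 by rewrite /ig mulrC divfK ?gt_eqF.
have C0 : 0 <= C by apply: le_trans hC; rewrite mulr_ge0.
have hvz : vz <= vy * ig by rewrite /ig mul1r ler_pdivlMr // mulrC ltW.
have p0 : 0 <= lw * vz by rewrite mulr_ge0.
have t1 : K1 * W <= C * (lw * vz) by nra.
have gCl : 0 <= gp * C * lw by rewrite !mulr_ge0 // ltW.
have t2 : gp * (C * (lw * vz)) <= gp * C * lw * (vy * ig) by nra.
have hc : gp * C * ig <= bw by rewrite /ig mul1r.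
have t3a : gp * C * ig * lw <= bw * bl by nra.
have t3 : gp * C * lw * (vy * ig) <= bw * bl * vy by nra.
have bb : 0 < bw * bl * vy by rewrite !mulr_gt0.
have t4 : bw * bl * vy < Lw * vy by rewrite -hq; nra.
have t5 : gp * (K1 * W) < K1 * Y.
  apply: le_lt_trans (ler_wpM2l (ltW gp0) t1) _; apply: le_lt_trans t2 _.
  by apply: le_lt_trans t3 _; apply: lt_le_trans t4 hL.
have K1p : 0 < K1.
  rewrite lt0r K10 andbT; apply/eqP => K1z; move: t5; rewrite K1z !mul0r mulr0 ltxx //.
by move: t5; rewrite mulrCA ltr_pM2l.
Qed.

Unset Implicit Arguments.

Theorem mainTheorem10 (R : realType) (k m : nat) (A : 'M[R]_(k + m))
  (lam : nat -> R[i]) (P : 'M[R[i]]_(k + m))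
  (Q1 : 'M[R]_(k + m, k)) (Q2 : 'M[R]_(k + m, m))
  (R1 : 'M[R]_(k, k + m)) (R2 : 'M[R]_(m, k + m))
  (N1 : 'M[R]_k) (N2 : 'M[R]_m) :
  (0 < k)%N -> (0 < m)%N ->
  (* A is diagonalizable with eigenvalues lam 1, ..., lam (k+m) *)
  P \in unitmx ->
  map_mx (real_complex R) A = P *m diag_mx (\row_(j < k + m) lam j.+1) *m invmx P ->
  (* |lam 1| >= ... >= |lam k| > 1 > |lam (k+1)| >= ... >= |lam (k+m)| *)
  (forall i j : nat, (1 <= i)%N -> (i <= j)%N -> (j <= k + m)%N ->
     cmod (lam j) <= cmod (lam i)) ->
  1 < cmod (lam k) -> cmod (lam k.+1) < 1 ->
  (* Q1, Q2 have orthonormal columns spanning E_u and E_s *)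
  Q1^T *m Q1 = 1%:M -> Q2^T *m Q2 = 1%:M ->
  (forall x : 'cV[R]_(k + m),
     (exists y : 'cV[R]_k, x = Q1 *m y) <->
     (exists z : 'cV[R[i]]_k, map_mx (real_complex R) x = lsubmx P *m z)) ->
  (forall x : 'cV[R]_(k + m),
     (exists y : 'cV[R]_m, x = Q2 *m y) <->
     (exists z : 'cV[R[i]]_m, map_mx (real_complex R) x = rsubmx P *m z)) ->
  (* Q = [Q1 Q2], Q^{-1} = [R1; R2], Q^{-1} A Q = diag(N1, N2) *)
  row_mx Q1 Q2 \in unitmx ->
  invmx (row_mx Q1 Q2) = col_mx R1 R2 ->
  invmx (row_mx Q1 Q2) *m A *m row_mx Q1 Q2 = block_mx N1 0 0 N2 ->
  N1 \in unitmx ->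
  specrad (invmx N1) = 1 / cmod (lam k) ->
  specrad N2 = cmod (lam k.+1) ->
  forall gamma eps2 eps3 : R, 0 < gamma -> 0 < eps2 -> 0 < eps3 ->
  let Cg := 1 / ((1 + 1 / gamma) * zeta eps3 (invmx N1) * zeta eps2 N2 * opnorm R2) in
  let base := cmod (lam k) / ((1 + eps3 * cmod (lam k)) * (cmod (lam k.+1) + eps2)) in
  (* ratio ||R1 x|| / ||R2 x|| > c  is written  c * ||R2 x|| < ||R1 x||
     (so ||R2 x|| = 0, ||R1 x|| > 0 counts as ratio = +oo) *)
  (forall x : 'cV[R]_(k + m), gamma * vnorm (R2 *m x) < vnorm (R1 *m x) ->
     forall w : nat,
       Cg * base ^+ w * vnorm (R2 *m (A ^+ w *m x)) < vnorm (R1 *m (A ^+ w *m x)))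
  /\
  (1 < base ->
   exists K : R, forall gp : R, 0 < gp ->
     exists w0 : nat,
       w0%:R <= K * (1 + Num.max 0 (ln (gp / gamma))) /\
       forall x : 'cV[R]_(k + m), gamma * vnorm (R2 *m x) < vnorm (R1 *m x) ->
         forall w : nat, (w0 < w)%N ->
           gp * vnorm (R2 *m (A ^+ w *m x)) < vnorm (R1 *m (A ^+ w *m x))).
Proof.
move=> hk hm hPu hA hmono hL1 hl1 hQ1o hQ2o hsp1 hsp2 hQu hinv hblk hN1u hsr1 hsr2
  gamma eps2 eps3 hg he2 he3 Cg base.
have [[e1 e2] e3 e4 e5 e6] := blocks hQu hinv hblk.
have L0 : 0 < cmod (lam k) by apply: lt_trans ltr01 hL1.
have l0 : 0 <= cmod (lam k.+1) by apply: sqrtr_ge0.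
have b2p : 0 < cmod (lam k.+1) + eps2 by apply: lt_le_trans he2 _; rewrite lerDr.
have a1p : 0 < 1 + eps3 * cmod (lam k) by rewrite addr_gt0 // mulr_gt0.
have hR1 : forall (x : 'cV[R]_(k + m)) (w : nat), R1 *m (A ^+ w *m x) = N1 ^+ w *m (R1 *m x).
  by move=> x w; rewrite mulmxA (pow_comm e3) -mulmxA.
have hR2 : forall (x : 'cV[R]_(k + m)) (w : nat), R2 *m (A ^+ w *m x) = N2 ^+ w *m (R2 *m x).
  by move=> x w; rewrite mulmxA (pow_comm e4) -mulmxA.
split.
  move=> x hx w; rewrite hR1 hR2.
  set y := R1 *m x; set z := R2 *m x.
  have vy0 : 0 < vnorm y by apply: le_lt_trans hx; rewrite mulr_ge0 ?vnorm_ge0 // ltW.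
  have Yp : 0 < vnorm (N1 ^+ w *m y).
    rewrite lt0r vnorm_ge0 andbT; apply/eqP => h0.
    have h := vnorm_eq0 h0.
    have : y = invmx N1 ^+ w *m (N1 ^+ w *m y) by rewrite mulmxA inv_pow ?mulVmx // mul1mx.
    by rewrite h mulmx0 => y0; move: vy0; rewrite y0 vnorm0 ltxx.
  have s3p : 0 < specrad (invmx N1) + eps3 by rewrite hsr1 addr_gt0 // divr_gt0.
  have s2p : 0 < specrad N2 + eps2 by rewrite hsr2; apply: lt_le_trans he2 _; rewrite lerDr.
  have Z30 := zeta_ge0 s3p; have Z20 := zeta_ge0 s2p; have O0 := opnorm_ge0 R2.
  case: (boolP ((0 < zeta eps3 (invmx N1)) && (0 < zeta eps2 N2))) => [/andP[Z3p Z2p] | hn]; last first.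
    rewrite /Cg; move: hn; rewrite !lt0r Z30 Z20 !andbT negb_and !negbK => /orP[/eqP-> | /eqP->];
      by rewrite /Cg ?mulr0 ?mul0r ?invr0 ?mulr0 ?mul0r.
  have hO : 1 <= opnorm R2.
    set e := const_mx 1 : 'cV[R]_m.
    have ve : 0 < vnorm e.
      rewrite /vnorm sqrtr_gt0; under eq_bigr do rewrite mxE expr1n.
      by rewrite sumr_const card_ord ltr0n.
    have hQe : vnorm (Q2 *m e) = vnorm e by rewrite !vnorm_tr trmx_mul mulmxA -(mulmxA _ _ Q2) hQ2o mulmx1.
    have := opnorm_bound R2 (Q2 *m e); rewrite mulmxA e2 mul1mx hQe.
    by rewrite -{1}[vnorm e]mul1r ler_pM2r.
  have hy : vnorm y <= zeta eps3 (invmx N1) * ((cmod (lam k) / (1 + eps3 * cmod (lam k))) ^+ w)^-1 * vnorm (N1 ^+ w *m y).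
    have -> : ((cmod (lam k) / (1 + eps3 * cmod (lam k))) ^+ w)^-1 = (specrad (invmx N1) + eps3) ^+ w.
      rewrite hsr1 -exprVn; congr (_ ^+ _); field.
      by rewrite !gt_eqF // addr_gt0 // mulr_gt0.
    have : y = invmx N1 ^+ w *m (N1 ^+ w *m y) by rewrite mulmxA inv_pow ?mulVmx // mul1mx.
    move=> {1}->; apply: le_trans (opnorm_bound _ _) _.
    by apply: ler_wpM2r; [apply: vnorm_ge0 | apply: zeta_bound].
  have hz : vnorm (N2 ^+ w *m z) <= zeta eps2 N2 * (cmod (lam k.+1) + eps2) ^+ w * vnorm z.
    apply: le_trans (opnorm_bound _ _) _.
    by apply: ler_wpM2r; [apply: vnorm_ge0 | rewrite -hsr2; apply: zeta_bound].
  have -> : base = (cmod (lam k) / (1 + eps3 * cmod (lam k))) / (cmod (lam k.+1) + eps2).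
    rewrite /base; field.
    by rewrite !gt_eqF.
  rewrite expr_div_n.
  apply: (@arith1 R gamma (zeta eps3 (invmx N1)) (zeta eps2 N2) (opnorm R2)
    ((cmod (lam k) / (1 + eps3 * cmod (lam k))) ^+ w) ((cmod (lam k.+1) + eps2) ^+ w)
    (vnorm y) (vnorm z) (vnorm (N1 ^+ w *m y)) (vnorm (N2 ^+ w *m z))) => //.
  - by rewrite exprn_gt0 // divr_gt0.
  - by rewrite exprn_gt0.
  - exact: vnorm_ge0.
  - exact: vnorm_ge0.
  - exact: vnorm_ge0.
move=> hb1.
have [K1 [K10 hK1]] := unstable_bound hPu hA hmono (fun x h => (hsp1 x).1 h) e1 e5.
have [K2 [K20 hK2]] := stable_bound hPu hA hmono (fun x h => (hsp2 x).1 h) e2 e6.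
set C := K1 * K2 + 1.
have C1 : 1 <= C by rewrite lerDr mulr_ge0.
have C0 : 0 < C by apply: lt_le_trans ltr01 C1.
set lb := ln base.
have lb0 : 0 < lb by apply: ln_gt0.
have lC0 : 0 <= ln C by apply: ln_ge0.
have base0 : 0 < base by apply: lt_trans ltr01 hb1.
exists ((1 + ln C) / lb) => gp gp0.
set M := Num.max 0 (ln (gp / gamma)).
have M0 : 0 <= M by rewrite le_max lexx.
set t := Num.max 0 ((ln (gp / gamma) + ln C) / lb).
have t0 : 0 <= t by rewrite le_max lexx.
exists (Num.truncn t); split.
  apply: le_trans (_ : t <= _); first by rewrite truncn_le.
  have htM : t <= (M + ln C) / lb.
    rewrite ge_max; apply/andP; split; first by rewrite divr_ge0 // ?addr_ge0 // ltW.
    rewrite ler_pM2r ?invr_gt0 // lerD2r le_max lexx orbT //.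
  apply: le_trans htM _.
  rewrite mulrAC ler_pM2r ?invr_gt0 //; nra.
move=> x hx w hw; rewrite hR1 hR2.
set y := R1 *m x; set z := R2 *m x.
have w1 : (0 < w)%N by apply: leq_ltn_trans hw.
have hwt : (ln (gp / gamma) + ln C) / lb <= w%:R.
  apply: le_trans (_ : t <= _); first by rewrite le_max lexx orbT.
  apply: ltW; apply: lt_le_trans (truncnS_gt t) _; by rewrite ler_nat.
have hbw : gp * C / gamma <= base ^+ w.
  rewrite -ler_ln ?posrE ?exprn_gt0 ?divr_gt0 ?mulr_gt0 //.
  rewrite lnXn // -/lb mulrAC lnM ?posrE ?divr_gt0 // -mulr_natr.
  by rewrite [lb * _]mulrC -ler_pdivrMr.
apply: (@arith2 R gp C gamma (vnorm y) (vnorm z) (vnorm (N1 ^+ w *m y)) (vnorm (N2 ^+ w *m z))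
  K1 K2 (cmod (lam k) ^+ w) (cmod (lam k.+1) ^+ w) (base ^+ w) ((cmod (lam k.+1) + eps2) ^+ w)
  ((1 + eps3 * cmod (lam k)) ^+ w)) => //.
- by rewrite lerDl.
- exact: vnorm_ge0.
- exact: exprn_ge0.
- by apply: lerXn2r; rewrite ?nnegrE ?lerDl // ltW.
- rewrite -!exprMn; congr (_ ^+ _); rewrite /base; field.
  by rewrite !gt_eqF.
- by rewrite exprn_egt1 -?lt0n // ltrDl mulr_gt0.
- exact: exprn_gt0.
- exact: exprn_gt0.
- exact: vnorm_ge0.
Qed.
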